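(* Let $\alpha=(\alpha_n)_{n\in\mathbb{Z}}\in(k^\times)^{\mathbb{Z}}$, $\beta=(\beta_n)_{n\in\mathbb{Z}}\in k^{\mathbb{Z}}$ and $r\in\mathbb{Z}$. Then $(\phi_\alpha\theta_r)\,\phi^{(1)}_\beta\,(\phi_\alpha\theta_r)^{-1}=\phi^{(1)}_{\alpha^{-1}\beta[-r]}$. In particular, $\phi_\alpha\phi^{(1)}_\beta\phi_\alpha^{-1}=\phi^{(1)}_{\alpha^{-1}\beta}$.
   Context: Let $k$ be a field and $0\neq q\in k$ not a root of unity. $H=k_q[x,x^{-1},y]$ is the $k$-algebra generated by $x,x^{-1},y$ with $xx^{-1}=x^{-1}x=1$, $yx=qxy$; $\{x^ny^m:n\in\mathbb{Z},m\in\mathbb{N}\}$ is a $k$-basis. For sequences in $k^{\mathbb{Z}}$ operations are componentwise; $\alpha^{-1}=(\alpha_n^{-1})_n$ and $\beta[r]$ denotes the sequence with $\beta[r]_n=\beta_{n+r}$. $\theta_r$ is the linear map $x^ny^m\mapsto x^{n+r}y^m$; $\phi_\alpha$ is the linear map with $\phi_\alpha(x^n)=x^n$, $\phi_\alpha(x^ny^m)=(\prod_{i=0}^{m-1}\alpha_{n+i})x^ny^m$ for $m\ge1$. With $(j)_q=1+q+\dots+q^{j-1}$, $(m,0)_q=1$, $(m,j)_q=\prod_{i=0}^{j-1}(m-i)_q$, $\beta_{n,0}=1$, $\beta_{n,j}=\prod_{i=0}^{j-1}\beta_{n+i}$, let $\phi^{(1)}_\beta$ be the linear map $H\to H$ with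 $\phi^{(1)}_\beta(x^ny^m)=x^ny^m+\sum_{l=0}^{m-1}(m,m-l)_q\big(\beta_{n,m-l}x^{n+m-l}-\beta_{n,m-l-1}\beta_{n+m-1}x^{n+m-l-1}\big)y^l$. *)

(* Defs.v *)
From HB Require Import structures.
From mathcomp Require Import all_boot all_order all_algebra.
From mathcomp Require Import finmap.
From mathcomp Require Import monalg.
Set Implicit Arguments. Unset Strict Implicit. Unset Printing Implicit Defensive.
Import Order.TTheory GRing.Theory Num.Theory.
Local Open Scope ring_scope.

(* Underlying k-vector space of H = k_q[x,x^{-1},y]; the basis element
   x^n y^m is the monomial indexed by (n, m). (Only the linear structure of H
   is used by the statement; all maps involved are merely k-linear.) *)
Definition Hq (k : fieldType) := {malg k[(int * nat)%type]}.

Definition xy (k : fieldType) (n : int) (m : nat) : Hq k := << (n, m) >>.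

Definition linext (k : fieldType) (f : int -> nat -> Hq k) (h : Hq k) : Hq k :=
  \sum_(p <- msupp h) h@_p *: f p.1 p.2.

Definition theta (k : fieldType) (r : int) : Hq k -> Hq k :=
  linext (fun n m => xy k (n + r) m).

Definition bprod (k : fieldType) (b : int -> k) (n : int) (j : nat) : k :=
  \prod_(i < j) b (n + (i : nat)%:Z).

Definition phi (k : fieldType) (a : int -> k) : Hq k -> Hq k :=
  linext (fun n m => bprod a n m *: xy k n m).

Definition qint (k : fieldType) (q : k) (j : nat) : k := \sum_(i < j) q ^+ i.

Definition qfall (k : fieldType) (q : k) (m j : nat) : k :=
  \prod_(i < j) qint q (m - i).

Definition phi1 (k : fieldType) (q : k) (b : int -> k) : Hq k -> Hq k :=
  linext (fun n m =>
    xy k n m +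
    \sum_(l < m)
      qfall q m (m - l) *:
        (bprod b n (m - l) *: xy k (n + (m - l)%:Z) l
         - (bprod b n (m - l - 1) * b (n + m%:Z - 1)) *: xy k (n + (m - l)%:Z - 1) l)).

Definition seqinv (k : fieldType) (a : int -> k) : int -> k := fun n => (a n)^-1.
Definition seqmul (k : fieldType) (a b : int -> k) : int -> k := fun n => a n * b n.
Definition seqshift (k : fieldType) (b : int -> k) (r : int) : int -> k :=
  fun n => b (n + r).

(* Main.v *)
Require Import Defs.
From HB Require Import structures.
From mathcomp Require Import all_boot all_order all_algebra.
From mathcomp Require Import finmap.
From mathcomp Require Import monalg.
From mathcomp Require Import ring.
From mathcomp Require Import zify.
Import Order.TTheory GRing.Theory Num.Theory.
Local Open Scope ring_scope.
Set Implicit Arguments. Unset Strict Implicit.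


Section S.
Variable k : fieldType.
Local Notation H := (Hq k).

Definition islin (F : H -> H) := forall (c : k) h1 h2, F (c *: h1 + h2) = c *: F h1 + F h2.

Lemma islin0 F : islin F -> F 0 = 0.
Proof.
move=> hF; have := hF 1 0 0; rewrite !scale1r addr0 => E.
by apply: (@addrI _ (F 0)); rewrite addr0 -E.
Qed.

Lemma islinD F : islin F -> forall h1 h2, F (h1 + h2) = F h1 + F h2.
Proof. by move=> hF h1 h2; rewrite -[h1]scale1r hF !scale1r. Qed.

Lemma islinZ F : islin F -> forall c h, F (c *: h) = c *: F h.
Proof. by move=> hF c h; rewrite -[c *: h]addr0 hF islin0 // addr0. Qed.

Lemma islinB F : islin F -> forall h1 h2, F (h1 - h2) = F h1 - F h2.
Proof.
by move=> hF h1 h2; rewrite islinD // -scaleN1r islinZ // scaleN1r.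
Qed.

Lemma islin_sum F (I : Type) (s : seq I) (G : I -> H) : islin F ->
  F (\sum_(i <- s) G i) = \sum_(i <- s) F (G i).
Proof.
move=> hF; elim: s => [|x s IH]; first by rewrite !big_nil islin0.
by rewrite !big_cons islinD // IH.
Qed.

Lemma islin_comp F G : islin F -> islin G -> islin (F \o G).
Proof. by move=> hF hG c h1 h2 /=; rewrite hG hF. Qed.

Lemma islin_id : islin id.
Proof. by []. Qed.

Lemma linextw (f : int -> nat -> H) (h : H) (D : {fset (int * nat)}) : (msupp h `<=` D)%fset ->
  linext f h = \sum_(p <- D) h@_p *: f p.1 p.2.
Proof.
move=> sub; rewrite /linext; apply: big_fset_incl => // x _ xn.
by rewrite mcoeff_outdom // scale0r.
Qed.

Lemma linext_islin (f : int -> nat -> H) : islin (linext f).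
Proof.
move=> c h1 h2.
have s1 : (msupp h1 `<=` msupp h1 `|` msupp h2)%fset by apply: fsubsetUl.
have s2 : (msupp h2 `<=` msupp h1 `|` msupp h2)%fset by apply: fsubsetUr.
have s3 : (msupp (c *: h1 + h2) `<=` msupp h1 `|` msupp h2)%fset.
  apply: fsubset_trans (msuppD_le _ _) _; apply: fsetSU; exact: msuppZ_le.
rewrite (linextw f s1) (linextw f s2) (linextw f s3) scaler_sumr -big_split /=.
by apply: eq_bigr => p _; rewrite mcoeffD mcoeffZ scalerDl scalerA.
Qed.

Lemma linext_xy (f : int -> nat -> H) n m : linext f (xy k n m) = f n m.
Proof.
rewrite (linextw f (@msuppU_le _ _ (n, m) 1)) big_seq_fset1 /xy mcoeffUU.
by rewrite scale1r.
Qed.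

Lemma xy_sum (h : H) : h = \sum_(p <- msupp h) h@_p *: xy k p.1 p.2.
Proof.
rewrite {1}(monalgE h); apply: eq_bigr => -[n m] _ /=.
by apply/malgP => p; rewrite mcoeffZ !mcoeffU mulr_natr.
Qed.

Lemma islin_ext F G : islin F -> islin G ->
  (forall n m, F (xy k n m) = G (xy k n m)) -> F =1 G.
Proof.
move=> hF hG E h; rewrite (xy_sum h) !islin_sum //.
by apply: eq_bigr => p _; rewrite !islinZ // E.
Qed.

End S.
Section T.
Variable k : fieldType.
Local Notation H := (Hq k).

Lemma bprodD (f : int -> k) n i j :
  bprod f n (i + j) = bprod f n i * bprod f (n + i%:Z) j.
Proof.
rewrite /bprod big_split_ord /=; congr (_ * _); apply: eq_bigr => x _.
by rewrite PoszD addrA.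
Qed.

Lemma bprod1 (f : int -> k) n : bprod f n 1 = f n.
Proof. by rewrite /bprod big_ord1 addr0. Qed.

Lemma bprodM (f g : int -> k) n j :
  bprod (fun t => f t * g t) n j = bprod f n j * bprod g n j.
Proof. by rewrite /bprod big_split. Qed.

Lemma bprodV (f : int -> k) n j :
  bprod (fun t => (f t)^-1) n j = (bprod f n j)^-1.
Proof. by rewrite /bprod prodfV. Qed.

Lemma bprod_neq0 (f : int -> k) n j : (forall t, f t != 0) -> bprod f n j != 0.
Proof. by move=> hf; rewrite /bprod; apply/prodf_neq0 => i _. Qed.

Lemma bprod_ext (f g : int -> k) n j : (forall t, f t = g t) -> bprod f n j = bprod g n j.
Proof. by move=> e; apply: eq_bigr => i _. Qed.

Definition Phi (a : int -> k) (r : int) : H -> H := phi a \o theta r.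

Lemma Phi_xy a r n m : Phi a r (xy k n m) = bprod a (n + r) m *: xy k (n + r) m.
Proof. by rewrite /Phi /= /theta linext_xy /phi linext_xy. Qed.

Lemma Phi_islin a r : islin (Phi a r).
Proof. exact: islin_comp (linext_islin _) (linext_islin _). Qed.

Definition Psi (a : int -> k) (r : int) : H -> H :=
  linext (fun n m => (bprod a n m)^-1 *: xy k (n - r) m).

Lemma Psi_xy a r n m : Psi a r (xy k n m) = (bprod a n m)^-1 *: xy k (n - r) m.
Proof. by rewrite /Psi linext_xy. Qed.

Lemma PsiK a r : (forall t, a t != 0) -> cancel (Psi a r) (Phi a r).
Proof.
move=> ha; apply: islin_ext.
- exact: islin_comp (Phi_islin _ _) (linext_islin _).
- exact: islin_id.
move=> n m /=; rewrite Psi_xy (islinZ (Phi_islin a r)) Phi_xy subrK scalerA.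
by rewrite mulVf ?scale1r // bprod_neq0.
Qed.

Lemma PhiK a r : (forall t, a t != 0) -> cancel (Phi a r) (Psi a r).
Proof.
move=> ha; apply: islin_ext.
- exact: islin_comp (linext_islin _) (Phi_islin _ _).
- exact: islin_id.
move=> n m /=; rewrite Phi_xy (islinZ (F:=Psi a r) (linext_islin _)) Psi_xy addrK scalerA.
by rewrite mulfV ?scale1r // bprod_neq0.
Qed.

End T.
Section U.
Variable k : fieldType.
Local Notation H := (Hq k).

Lemma phi1_xy q b n m : phi1 q b (xy k n m) = xy k n m +
    \sum_(l < m)
      qfall q m (m - l) *:
        (bprod b n (m - l) *: xy k (n + (m - l)%:Z) l
         - (bprod b n (m - l - 1) * b (n + m%:Z - 1)) *: xy k (n + (m - l)%:Z - 1) l).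
Proof. by rewrite /phi1 linext_xy. Qed.

Lemma bprod_shift (f : int -> k) n r j :
  bprod (fun t => f (t - r)) (n + r) j = bprod f n j.
Proof. by apply: eq_bigr => i _; congr f; rewrite addrAC addrK. Qed.

Lemma coef1 (a b b' : int -> k) (r n : int) (m l : nat) : (forall t, a t != 0) ->
  (forall t, b' t = (a t)^-1 * b (t - r)) -> (l < m)%N ->
  bprod b n (m - l) * bprod a (n + (m - l)%N + r) l
  = bprod a (n + r) m * bprod b' (n + r) (m - l).
Proof.
move=> ha hb' hl; have [j ->] : exists j, m = (j + l)%N by exists (m - l)%N; rewrite subnK // ltnW.
rewrite addnK bprodD (bprod_ext _ _ hb') bprodM bprodV bprod_shift addrAC.
have := bprod_neq0 (n + r) j ha; set A := bprod a (n + r) j => hA.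
by field.
Qed.

Lemma coef2 (a b b' : int -> k) (r n : int) (m l : nat) : (forall t, a t != 0) ->
  (forall t, b' t = (a t)^-1 * b (t - r)) -> (l < m)%N ->
  (bprod b n (m - l - 1) * b (n + m%:Z - 1)) * bprod a (n + (m - l)%N - 1 + r) l
  = bprod a (n + r) m * (bprod b' (n + r) (m - l - 1) * b' (n + r + m%:Z - 1)).
Proof.
move=> ha hb' hl; have [j ->] : exists j, m = (j + (l + 1))%N.
  by exists (m - l - 1)%N; lia.
have -> : (j + (l + 1) - l - 1 = j)%N by lia.
have -> : (j + (l + 1) - l = j + 1)%N by lia.
rewrite (bprod_ext _ _ hb') bprodM bprodV bprod_shift hb'.
rewrite bprodD bprodD bprod1.
have -> : n + (j + 1)%N - 1 + r = n + r + j by rewrite PoszD; ring.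
have -> : n + r + (j + (l + 1))%N - 1 - r = n + (j + (l + 1))%N - 1 by ring.
have -> : n + r + (j + (l + 1))%N - 1 = n + r + j + l by rewrite !PoszD; ring.
have := bprod_neq0 (n + r) j ha; set A := bprod a (n + r) j => hA.
have := ha (n + r + j + l); set c := a (n + r + j + l) => hc.
set B := bprod b n j; set d := b _; set P := bprod a _ l.
by field; rewrite hc hA.
Qed.

Lemma recomb (Q A c1 c2 e1 e2 d1 d2 : k) (X Y : H) :
  c1 * e1 = A * d1 -> c2 * e2 = A * d2 ->
  Q *: (c1 *: (e1 *: X) - c2 *: (e2 *: Y)) = A *: (Q *: (d1 *: X - d2 *: Y)).
Proof.
move=> E1 E2; rewrite (scalerA c1 e1 X) (scalerA c2 e2 Y) E1 E2.
rewrite -(scalerA A d1 X) -(scalerA A d2 Y) -scalerBr.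
by rewrite (scalerA Q A) (scalerA A Q) mulrC.
Qed.

Lemma key (q : k) (a b b' : int -> k) (r : int) : (forall t, a t != 0) ->
  (forall t, b' t = (a t)^-1 * b (t - r)) ->
  forall h, Phi a r (phi1 q b h) = phi1 q b' (Phi a r h).
Proof.
move=> ha hb'; apply: islin_ext.
- exact: islin_comp (Phi_islin _ _) (linext_islin _).
- exact: islin_comp (linext_islin _) (Phi_islin _ _).
move=> n m /=; rewrite Phi_xy (islinZ (F:=phi1 q b') (linext_islin _)).
rewrite !phi1_xy.
rewrite (islinD (Phi_islin a r)) Phi_xy scalerDr; congr (_ + _).
rewrite (islin_sum _ _ (Phi_islin a r)) scaler_sumr; apply: eq_bigr => l _.
rewrite (islinZ (Phi_islin a r)) (islinB (Phi_islin a r)) !(islinZ (Phi_islin a r)).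
rewrite !Phi_xy.
have hl := ltn_ord l.
have I1 : n + r + (m - l)%N = n + (m - l)%N + r by rewrite addrAC.
have I2 : n + r + (m - l)%N - 1 = n + (m - l)%N - 1 + r by ring.
rewrite I2 I1; apply: recomb; [exact: coef1 | exact: coef2].
Qed.
End U.

Lemma theta0 (k : fieldType) (h : Hq k) : theta 0 h = h.
Proof.
apply: (@islin_ext k (theta 0) id (linext_islin _) (@islin_id k)) => n m.
by rewrite /theta linext_xy addr0.
Qed.

Theorem lemma3p15 (k : fieldType) (q : k)
    (hq0 : q != 0) (hq : forall n : nat, (0 < n)%N -> q ^+ n != 1)
    (a b : int -> k) (ha : forall n, a n != 0) (r : int) :
  (* phi_alpha theta_r is invertible ... *)
  (exists psi : Hq k -> Hq k,
      cancel psi (phi a \o theta r) /\ cancel (phi a \o theta r) psi) /\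
  (* ... and conjugation by it sends phi^(1)_beta to phi^(1)_{alpha^-1 beta[-r]} *)
  (forall psi : Hq k -> Hq k,
      cancel psi (phi a \o theta r) -> cancel (phi a \o theta r) psi ->
      (phi a \o theta r) \o phi1 q b \o psi
        =1 phi1 q (seqmul (seqinv a) (seqshift b (- r)))) /\
  (* in particular (r = 0) *)
  (exists psi : Hq k -> Hq k, cancel psi (phi a) /\ cancel (phi a) psi) /\
  (forall psi : Hq k -> Hq k,
      cancel psi (phi a) -> cancel (phi a) psi ->
      phi a \o phi1 q b \o psi =1 phi1 q (seqmul (seqinv a) b)).
Proof.
split.
  by exists (Psi a r); split; [exact: PsiK | exact: PhiK].
split.
  move=> psi c1 _ h.
  have := @key k q a b (seqmul (seqinv a) (seqshift b (- r))) r ha (fun t => erefl) (psi h).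
  rewrite /Phi /= => ->; congr (phi1 _ _ _); exact: c1.
split.
  exists (Psi a 0); split => h.
    by rewrite -[in LHS](theta0 (Psi a 0 h)); exact: (PsiK 0 ha h).
  by rewrite -{1}(theta0 h); exact: (PhiK 0 ha h).
move=> psi c1 _ h /=.
have hb : forall t, seqmul (seqinv a) b t = (a t)^-1 * b (t - 0).
  by move=> t; rewrite subr0.
rewrite -(theta0 (phi1 q b (psi h))).
have := @key k q a b _ 0 ha hb (psi h).
rewrite /Phi /= => ->; rewrite theta0; congr (phi1 _ _ _); exact: c1.
Qed.
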